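(* Let $\Sigma_C\subseteq N_C$ and $\Sigma_R\subseteq N_R$ be finite, let $B\in N_C\setminus\Sigma_C$, and let $\mathcal R$ be the TBox consisting of the axioms $B\sqsubseteq A$ for every $A\in\Sigma_C$ and $B\sqsubseteq\forall r.B$ for every $r\in\Sigma_R$. Let $\mathcal J$ be a model of $\mathcal R$ and $\mathcal I$ an interpretation with $\Delta^{\mathcal I}=\Delta^{\mathcal J}\setminus B^{\mathcal J}$, $A^{\mathcal I}=A^{\mathcal J}\setminus B^{\mathcal J}$ for every $A\in N_C$, and $r^{\mathcal I}=\{(x,y)\in r^{\mathcal J}\mid x\notin B^{\mathcal J},\ y\notin B^{\mathcal J}\}$ for every $r\in N_R$. Then for every word $w\in\Sigma_R^*$ and every $\mathcal{FL}_{\bot\mathit{reg}}$ concept description $M$ containing only concept names from $\Sigma_C$ and role names from $\Sigma_R$ such that $M^{\mathcal I}=(M^B)^{\mathcal J}\setminus B^{\mathcal J}$, we also have $(\forall w.M)^{\mathcal I}=(\forall w.M^B)^{\mathcal J}\setminus B^{\mathcal J}$. Here $M^B$ is obtained from $M$ by replacing every occurrence of $\bot$ with $B$, and $w$ is regarded as a regular role expression.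
   Context: Let $N_C$ and $N_R$ be disjoint countably infinite sets of concept names and role names. Regular role expressions are generated by $E ::= \emptyset \mid \varepsilon \mid r \mid (E+E) \mid (EE) \mid E^{*}$ with $r\in N_R$, with languages $\mathcal L(E)\subseteq N_R^*$. $\mathcal{FL}_{\bot\mathit{reg}}$ concept descriptions: $C ::= A \mid \top \mid \bot \mid (C\sqcap C) \mid \forall E.C$ with $A\in N_C$. An interpretation $\mathcal I$ has a domain $\Delta^{\mathcal I}$, $A^{\mathcal I}\subseteq\Delta^{\mathcal I}$, $r^{\mathcal I}\subseteq(\Delta^{\mathcal I})^2$; $E^{\mathcal I}$ is the union over $r_1\cdots r_n\in\mathcal L(E)$ of $r_1^{\mathcal I}\circ\cdots\circ r_n^{\mathcal I}$ (identity for the empty word); $\top^{\mathcal I}=\Delta^{\mathcal I}$, $\bot^{\mathcal I}=\emptyset$, $\sqcap$ is intersection, $(\forall E.C)^{\mathcal I}=\{x\in\Delta^{\mathcal I}\mid y\in C^{\mathcal I}$ whenever $(x,y)\in E^{\mathcal I}\}$. $\mathcal J$ is a model of a TBox (finite set of axioms $K\sqsubseteq M$) if $K^{\mathcal J}\subseteq M^{\mathcal J}$ for all its axioms. *)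

(* Defs.v *)
From Stdlib Require Import List.
Import ListNotations.
Set Implicit Arguments.

(* N_C and N_R: two disjoint countably infinite sets, modelled as two
   distinct copies of nat. *)
Definition cname := nat.
Definition rname := nat.

Inductive regexp : Type :=
| RNone : regexp
| REps : regexp
| RRole : rname -> regexp
| RPlus : regexp -> regexp -> regexp
| RConc : regexp -> regexp -> regexp
| RStar : regexp -> regexp.

Inductive lang : regexp -> list rname -> Prop :=
| lang_eps : lang REps []
| lang_role : forall r, lang (RRole r) [r]
| lang_plusl : forall E F w, lang E w -> lang (RPlus E F) w
| lang_plusr : forall E F w, lang F w -> lang (RPlus E F) w
| lang_conc : forall E F u v, lang E u -> lang F v -> lang (RConc E F) (u ++ v)
| lang_star0 : forall E, lang (RStar E) []
| lang_starS : forall E u v, lang E u -> lang (RStar E) v -> lang (RStar E) (u ++ v).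

Inductive concept : Type :=
| CAtom : cname -> concept
| CTop : concept
| CBot : concept
| CAnd : concept -> concept -> concept
| CAll : regexp -> concept -> concept.

(* An interpretation over an ambient carrier type D: the domain is a subset of D. *)
Record interp (D : Type) := {
  dom : D -> Prop;
  cn : cname -> D -> Prop;
  rn : rname -> D -> D -> Prop }.

Definition is_interp D (I : interp D) : Prop :=
  (forall A x, cn I A x -> dom I x) /\
  (forall r x y, rn I r x y -> dom I x /\ dom I y).

Fixpoint wrel D (I : interp D) (w : list rname) (x y : D) : Prop :=
  match w with
  | [] => x = y /\ dom I x
  | r :: w' => exists z, rn I r x z /\ wrel I w' z y
  end.

Definition rsem D (I : interp D) (E : regexp) (x y : D) : Prop :=
  exists w, lang E w /\ wrel I w x y.

Fixpoint csem D (I : interp D) (C : concept) (x : D) : Prop :=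
  match C with
  | CAtom A => cn I A x
  | CTop => dom I x
  | CBot => False
  | CAnd C1 C2 => csem I C1 x /\ csem I C2 x
  | CAll E C' => dom I x /\ forall y, rsem I E x y -> csem I C' y
  end.

Definition tbox := list (concept * concept).

Definition is_model D (J : interp D) (T : tbox) : Prop :=
  forall K M, In (K, M) T -> forall x, csem J K x -> csem J M x.

Definition tboxR (SC : list cname) (SR : list rname) (B : cname) : tbox :=
  map (fun A => (CAtom B, CAtom A)) SC ++
  map (fun r => (CAtom B, CAll (RRole r) (CAtom B))) SR.

Fixpoint re_sig (SR : list rname) (E : regexp) : Prop :=
  match E with
  | RNone | REps => True
  | RRole r => In r SR
  | RPlus E F | RConc E F => re_sig SR E /\ re_sig SR F
  | RStar E => re_sig SR E
  end.

Fixpoint concept_sig (SC : list cname) (SR : list rname) (C : concept) : Prop :=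
  match C with
  | CAtom A => In A SC
  | CTop | CBot => True
  | CAnd C1 C2 => concept_sig SC SR C1 /\ concept_sig SC SR C2
  | CAll E C' => re_sig SR E /\ concept_sig SC SR C'
  end.

Fixpoint replBot (B : cname) (C : concept) : concept :=
  match C with
  | CAtom A => CAtom A
  | CTop => CTop
  | CBot => CAtom B
  | CAnd C1 C2 => CAnd (replBot B C1) (replBot B C2)
  | CAll E C' => CAll E (replBot B C')
  end.

Fixpoint word_re (w : list rname) : regexp :=
  match w with
  | [] => REps
  | r :: w' => RConc (RRole r) (word_re w')
  end.

(* Main.v *)
Require Import Defs.
From Stdlib Require Import List Classical.
Import ListNotations.

Lemma word_re_in w : lang (word_re w) w.
Proof.
  induction w as [|r w IH]; simpl. constructor.
  change (r :: w) with ([r] ++ w). constructor. constructor. exact IH.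
Qed.

Lemma word_re_eq w v : lang (word_re w) v -> v = w.
Proof.
  revert v; induction w as [|r w IH]; simpl; intros v H.
  - inversion H; auto.
  - inversion H; subst. match goal with H' : lang (RRole _) _ |- _ => inversion H'; subst end.
    simpl. f_equal. auto.
Qed.

Lemma lang_sig SR E v : re_sig SR E -> lang E v -> Forall (fun r => In r SR) v.
Proof.
  intros HS H; induction H; simpl in *; try tauto; auto.
  - apply Forall_app; tauto.
  - apply Forall_app; tauto.
Qed.

Section S.
Variables (SC : list cname) (SR : list rname) (B : cname) (D : Type) (J I : interp D).
Hypothesis HJ : is_interp J.
Hypothesis HM : is_model J (tboxR SC SR B).

Lemma propB v y z : Forall (fun r => In r SR) v -> wrel J v y z -> cn J B y -> cn J B z.
Proof.
  revert y; induction v as [|r v IH]; simpl; intros y Hf Hw Hb.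
  - destruct Hw; subst; auto.
  - inversion Hf; subst. destruct Hw as [z' [Hr Hw]].
    apply (IH z'); auto.
    assert (Hin : In (CAtom B, CAll (RRole r) (CAtom B)) (tboxR SC SR B)).
    { unfold tboxR. apply in_or_app. right. apply in_map_iff. eauto. }
    pose proof (HM _ _ Hin y Hb) as [_ H]. apply H.
    exists [r]. split. constructor. simpl. exists z'. split; auto. split; auto.
    apply (proj2 HJ r y z' Hr).
Qed.

Lemma Bsub M y : ~ In B SC -> concept_sig SC SR M -> cn J B y -> csem J (replBot B M) y.
Proof.
  intros HB; revert y; induction M; simpl; intros y Hs Hb; auto.
  - assert (Hin : In (CAtom B, CAtom c) (tboxR SC SR B)).
    { unfold tboxR. apply in_or_app. left. apply in_map_iff. eauto. }
    exact (HM _ _ Hin y Hb).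
  - exact (proj1 HJ B y Hb).
  - destruct Hs; split; auto.
  - split. exact (proj1 HJ B y Hb).
    intros z [v [Hl Hw]]. apply IHM. tauto.
    apply (propB v y z); auto. apply (lang_sig SR r); tauto.
Qed.

Hypothesis Hdom : forall x, dom I x <-> dom J x /\ ~ cn J B x.
Hypothesis Hcn : forall A x, cn I A x <-> cn J A x /\ ~ cn J B x.
Hypothesis Hrn : forall r x y, rn I r x y <-> rn J r x y /\ ~ cn J B x /\ ~ cn J B y.

Lemma wrelIJ w x y : wrel I w x y -> wrel J w x y /\ ~ cn J B y.
Proof.
  revert x; induction w as [|r w IH]; simpl; intros x H.
  - destruct H; subst. apply Hdom in H0. tauto.
  - destruct H as [z [Hr Hw]]. apply IH in Hw. apply Hrn in Hr.
    split; [exists z; tauto | tauto].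
Qed.

Lemma wrelJI w x y : Forall (fun r => In r SR) w -> dom J x -> ~ cn J B x ->
  wrel J w x y -> wrel I w x y \/ cn J B y.
Proof.
  revert x; induction w as [|r w IH]; simpl; intros x Hf Hd Hb H.
  - destruct H; subst. left. split; auto. apply Hdom; auto.
  - inversion Hf; subst. destruct H as [z [Hr Hw]].
    destruct (classic (cn J B z)) as [Hz|Hz].
    + right. apply (propB w z y); auto.
    + destruct (IH z H3 (proj2 (proj2 HJ r x z Hr)) Hz Hw) as [H|H]; auto.
      left. exists z. split; auto. apply Hrn; auto.
Qed.
End S.

Theorem lemma6 (SC : list cname) (SR : list rname) (B : cname)
  (D : Type) (J I : interp D) :
  ~ In B SC ->
  is_interp J ->
  is_model J (tboxR SC SR B) ->
  (forall x, dom I x <-> dom J x /\ ~ cn J B x) ->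
  (forall A x, cn I A x <-> cn J A x /\ ~ cn J B x) ->
  (forall r x y, rn I r x y <-> rn J r x y /\ ~ cn J B x /\ ~ cn J B y) ->
  forall (w : list rname) (M : concept),
    Forall (fun r => In r SR) w ->
    concept_sig SC SR M ->
    (forall x, csem I M x <-> csem J (replBot B M) x /\ ~ cn J B x) ->
    forall x, csem I (CAll (word_re w) M) x <->
              csem J (CAll (word_re w) (replBot B M)) x /\ ~ cn J B x.
Proof.
  intros HB HJ HM Hdom Hcn Hrn w M Hw HMs HMeq x. simpl. split.
  - intros [Hd H]. apply Hdom in Hd. destruct Hd as [Hd Hb].
    split; [split|]; auto.
    intros y [v [Hl Hr]]. apply word_re_eq in Hl; subst v.
    destruct (wrelJI SC SR B D J I HJ HM Hdom Hrn w x y Hw Hd Hb Hr) as [H1|H1].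
    + apply HMeq. apply H. exists w. split; auto. apply word_re_in.
    + apply (Bsub SC SR); auto.
  - intros [[Hd H] Hb]. split. apply Hdom; auto.
    intros y [v [Hl Hr]]. apply word_re_eq in Hl; subst v.
    apply (wrelIJ B D J I Hdom Hrn) in Hr.
    apply HMeq. split; [|tauto]. apply H. exists w. split. apply word_re_in. tauto.
Qed.
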